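(* Let $m,K$ be positive integers and $b_1,\dots,b_{3m}$ positive integers with $K/4<b_i<K/2$ and $\sum_i b_i=mK$. Set $W=100(5m)^2K$, $a_i=b_i+W$, $L=3W+K$, $\epsilon=1/(400(5m)^2)$, $h=\lfloor 4\epsilon L\rfloor$, $H=L+h$, $\beta_0=h/H$, $\beta_i=a_i/H-1/3$ ($1\le i\le 3m$). Let $X$ be the multiset consisting of $a_1,\dots,a_{3m}$, $m$ copies of $-H$ and $m$ copies of $h$, and let $T_{\min}$ be a minimum-cost addition tree over $X$. If a node $z$ of $T_{\min}$ has value of the form $(1/3+\lambda)H$, then $z$ is a leaf.
   Context: An addition tree over a multiset $X$ is a full binary tree whose leaves are labeled by the elements of $X$ (each used once), each internal node having value equal to the sum of its children's values; its cost is the sum of the absolute values of its internal nodes, and $T_{\min}$ minimizes the cost. A ''$\lambda$'' denotes a sum of at most $5m$ numbers each of the form $\pm\beta_i$ with $0\le i\le 3m$. Every node value can be written as $(N/3+\lambda)H$ with $N$ an integer; since $|\lambda|\le 1/(500m)$, $N$ and the value of $\lambda$ are uniquely determined. *)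

(* Defs.v *)
From mathcomp Require Import all_boot all_order all_algebra.
Set Implicit Arguments. Unset Strict Implicit. Unset Printing Implicit Defensive.
Import Order.TTheory GRing.Theory Num.Theory.
Local Open Scope ring_scope.

Inductive tree : Type := Leaf of int | Node of tree & tree.

Fixpoint nval (t : tree) : int :=
  match t with Leaf x => x | Node l r => nval l + nval r end.

Fixpoint leaves (t : tree) : seq int :=
  match t with Leaf x => [:: x] | Node l r => leaves l ++ leaves r end.

Fixpoint cost (t : tree) : int :=
  match t with
  | Leaf _ => 0
  | Node l r => `|nval l + nval r| + cost l + cost r
  end.

Fixpoint is_node (z t : tree) : Prop :=
  z = t \/ match t with Leaf _ => False | Node l r => is_node z l \/ is_node z r end.

Definition addition_tree (X : seq int) (t : tree) : Prop := perm_eq (leaves t) X.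

Definition min_addition_tree (X : seq int) (t : tree) : Prop :=
  addition_tree X t /\ forall t', addition_tree X t' -> cost t <= cost t'.

Section Params.
Variables (m K : nat) (b : nat -> nat).

Definition W : nat := (100 * (5 * m) ^ 2 * K)%N.
Definition a (i : nat) : nat := (b i + W)%N.
Definition L : nat := (3 * W + K)%N.
Definition eps : rat := 1 / (400 * ((5 * m) ^ 2)%:R).
Definition h : int := Num.floor (4 * eps * L%:R).
Definition H : int := L%:Z + h.
Definition beta (i : nat) : rat :=
  if i == 0%N then h%:~R / H%:~R else (a i)%:R / H%:~R - 1 / 3.

Definition Xms : seq int :=
  [seq (a i)%:Z | i <- iota 1 (3 * m)] ++ nseq m (- H) ++ nseq m h.

Definition is_lambda (lam : rat) : Prop :=
  exists s : seq (bool * nat),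
    (size s <= 5 * m)%N /\ all (fun p => (p.2 <= 3 * m)%N) s /\
    lam = \sum_(p <- s) (if p.1 then - beta p.2 else beta p.2).
End Params.

(* Main.v *)
Require Import Defs.
From mathcomp Require Import all_boot all_order all_algebra.
From mathcomp Require Import ring lra zify.
Import Order.TTheory GRing.Theory Num.Theory.
Local Open Scope ring_scope.


Lemma floor_bounds (K Q : nat) : (0 < Q)%N ->
  (3 * K)%:Z <= Num.floor (((3 * Q * K + K)%N)%:R / Q%:R : rat) /\
  Num.floor (((3 * Q * K + K)%N)%:R / Q%:R : rat) <= (4 * K)%:Z.
Proof.
move=> hQ.
split.
- rewrite floor_ge_int ler_pdivlMr ?ltr0n // pmulrn -natrM ler_nat.
  by rewrite mulnAC leq_addr.
- apply: (@le_trans _ _ (Num.floor (((4 * K)%N)%:R : rat))).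
    apply: le_floor. rewrite ler_pdivrMr ?ltr0n // -natrM ler_nat.
    have := leq_pmulr K hQ; nia.
  by rewrite (pmulrn (1:rat)) intrKfloor.
Qed.

Lemma h_bounds (m K : nat) : (0 < m)%N ->
  (3 * K)%:Z <= h m K /\ h m K <= (4 * K)%:Z.
Proof.
move=> hm.
set M := ((5 * m) ^ 2)%N.
have hM : (0 < M)%N by rewrite /M expn_gt0 muln_gt0 hm.
have hW : W m K = (100 * M * K)%N by [].
have he : eps m = 1 / (400 * M%:R) by [].
have -> : h m K = Num.floor (4 * eps m * (L m K)%:R) by [].
clearbody M.
have hQ : (0 < 100 * M)%N by rewrite muln_gt0.
have hL : L m K = (3 * (100 * M) * K + K)%N by rewrite /L hW; lia.
rewrite he hL.
have -> : (400 * M%:R : rat) = 4 * (100 * M)%:R by rewrite natrM; ring.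
move: (100 * M)%N hQ => Q hQ.
have hP : (Q%:R : rat) != 0 by rewrite pnatr_eq0 -lt0n.
have -> : 4 * (1 / (4 * Q%:R)) * ((3 * Q * K + K)%N)%:R = ((3 * Q * K + K)%N)%:R / Q%:R :> rat.
  move: (((3 * Q * K + K)%N)%:R : rat) => X.
  move: (Q%:R : rat) hP => P hP. by field.
exact: floor_bounds.
Qed.

Definition cN (Hv x : int) : int := if x < 0 then -3 else if 6 * x < Hv then 0 else 1.
Fixpoint Nt (Hv : int) (t : tree) : int :=
  match t with Leaf x => cN Hv x | Node l r => Nt Hv l + Nt Hv r end.
Fixpoint qt (t : tree) : int :=
  match t with Leaf x => if x < 0 then 1 else 0 | Node l r => qt l + qt r end.
Fixpoint SN (Hv : int) (t : tree) : int :=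
  match t with Leaf _ => 0 | Node l r => `|Nt Hv l + Nt Hv r| + SN Hv l + SN Hv r end.
Fixpoint bad (Hv : int) (t : tree) : bool :=
  match t with Leaf _ => false
  | Node l r => (Nt Hv l + Nt Hv r == 1) || bad Hv l || bad Hv r end.
Definition cf (n : int) : int :=
  if n <= -3 then n else if n == -2 then -1 else if n <= 1 then 0 else n.

Lemma cfA (x y : int) : cf (x + y) - `|x + y| <= cf x + cf y.
Proof. rewrite /cf; repeat case: ifP; lia. Qed.

Lemma cfB (x y : int) : x + y = 1 -> 0 <= cf x + cf y.
Proof. rewrite /cf; repeat case: ifP; lia. Qed.

Lemma comb (Hv : int) (t : tree) :
  3 * qt t + cf (Nt Hv t) + (bad Hv t)%:Z <= SN Hv t.
Proof.
elim: t => [x|l IHl r IHr] /=.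
  by rewrite /cN; case: ifP => _; [|case: ifP => _].
have A := cfA (Nt Hv l) (Nt Hv r).
have B := @cfB (Nt Hv l) (Nt Hv r).
move: IHl IHr; case: (bad Hv l); case: (bad Hv r) => /= IHl IHr;
 rewrite ?orbT ?orbF /=; try lia.
case: eqP => [E|_] /=; last lia.
have := B E; rewrite E (_ : cf 1 = 0) //; lia.
Qed.

Lemma bad_node (Hv : int) (z t : tree) : is_node z t ->
  (exists l r, z = Node l r) -> Nt Hv z = 1 -> bad Hv t.
Proof.
move=> hz [l [r E]] hN; subst z.
elim: t hz => [x|l' IHl r' IHr] /=.
  by case=> [E|[]].
case=> [E|[/IHl ->|/IHr ->]]; rewrite ?orbT //.
by case: E hN => <- <- /= ->; rewrite eqxx.
Qed.

Lemma size_leaves_pos t : (0 < size (leaves t))%N.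
Proof. by elim: t => [x|l IHl r IHr] //=; rewrite size_cat addn_gt0 IHl. Qed.

Definition leafok (Hv D : int) (t : tree) :=
  forall x, x \in leaves t -> `|3 * x - Hv * cN Hv x| <= D.

Lemma leafok_l Hv D l r : leafok Hv D (Node l r) -> leafok Hv D l.
Proof. by move=> h x hx; apply: h; rewrite /= mem_cat hx. Qed.
Lemma leafok_r Hv D l r : leafok Hv D (Node l r) -> leafok Hv D r.
Proof. by move=> h x hx; apply: h; rewrite /= mem_cat hx orbT. Qed.

Arguments leafok_l {Hv D l r}.
Arguments leafok_r {Hv D l r}.

Lemma delta_bound Hv D t : leafok Hv D t ->
  `|3 * nval t - Hv * Nt Hv t| <= D * (size (leaves t))%:Z.
Proof.
elim: t => [x|l IHl r IHr] /= hok.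
  by rewrite mulr1; apply: hok; rewrite inE.
have := IHl (leafok_l hok); have := IHr (leafok_r hok).
rewrite size_cat PoszD => h1 h2.
rewrite (_ : 3 * (nval l + nval r) - Hv * (Nt Hv l + Nt Hv r) =
   (3 * nval l - Hv * Nt Hv l) + (3 * nval r - Hv * Nt Hv r)); last by ring.
apply: le_trans (ler_normD _ _) _. rewrite mulrDr. exact: lerD h2 h1.
Qed.

Arguments delta_bound {Hv D t}.

Lemma cost_bound Hv D t : 0 <= Hv -> 0 <= D -> leafok Hv D t ->
  `|3 * cost t - Hv * SN Hv t| <= D * (size (leaves t))%:Z ^+ 2.
Proof.
move=> hH hD.
elim: t => [x|l IHl r IHr] /= hok.
  by rewrite !mulr0 subr0 normr0 mulr_ge0 // exprn_ge0.
have h1 := IHl (leafok_l hok); have h2 := IHr (leafok_r hok).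
have h3 := delta_bound hok.
have hl := size_leaves_pos l; have hr := size_leaves_pos r.
move: h1 h2 h3 => /=; rewrite size_cat.
move: (size (leaves l)) (size (leaves r)) hl hr => nl nr hl hr h1 h2 h3.
have h4 := ler_dist_dist (3 * (nval l + nval r)) (Hv * (Nt Hv l + Nt Hv r)).
rewrite !normrM (ger0_norm hH) (_ : `|3| = 3 :> int) // in h4.
have h5 : (nl + nr <= 2 * nl * nr)%N by nia.
have h6 : D * (nl + nr)%:Z <= D * (2 * nl * nr)%:Z by rewrite ler_wpM2l // lez_nat.
rewrite (_ : 3 * (`|nval l + nval r| + cost l + cost r) -
  Hv * (`|Nt Hv l + Nt Hv r| + SN Hv l + SN Hv r) =
  (3 * `|nval l + nval r| - Hv * `|Nt Hv l + Nt Hv r|) +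
  (3 * cost l - Hv * SN Hv l) + (3 * cost r - Hv * SN Hv r)); last by ring.
apply: le_trans (ler_normD _ _) _.
apply: le_trans (lerD (ler_normD _ _) (lexx _)) _.
have e : D * (nl + nr)%:Z ^+ 2 = D * (nl + nr)%:Z - D * (nl + nr)%:Z + D * nl%:Z ^+ 2 + D * nr%:Z ^+ 2 + D * (2 * nl * nr)%:Z.
  rewrite !PoszD !PoszM; ring.
rewrite e. lia.
Qed.

Definition grp (av : nat -> int) (HH : int) (j : nat) : tree :=
  Node (Node (Node (Leaf (- HH)) (Leaf (av (3 * j).+1))) (Leaf (av (3 * j).+2)))
       (Leaf (av (3 * j).+3)).
Fixpoint Fg (av : nat -> int) (HH hh : int) (k : nat) : tree :=
  match k with
  | 0 => Node (grp av HH 0) (Leaf hh)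
  | k'.+1 => Node (Node (grp av HH k) (Leaf hh)) (Fg av HH hh k')
  end.

Lemma iota_step k : iota 1 (3 * k.+1) = iota 1 (3 * k) ++ [:: (3 * k).+1; (3 * k).+2; (3 * k).+3].
Proof. by rewrite (_ : (3 * k.+1 = 3 * k + 3)%N) ?iotaD ?add1n //; lia. Qed.

Lemma Fg_perm av HH hh k :
  perm_eq (leaves (Fg av HH hh k))
    ([seq av i | i <- iota 1 (3 * k.+1)] ++ nseq k.+1 (- HH) ++ nseq k.+1 hh).
Proof.
apply/permP => p.
elim: k => [|k IH].
  rewrite /= !muln0; lia.
rewrite iota_step map_cat.
have -> : leaves (Fg av HH hh k.+1) = leaves (grp av HH k.+1) ++ [:: hh] ++ leaves (Fg av HH hh k).
  by rewrite [in LHS]/= -catA.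
rewrite (_ : nseq k.+2 (-HH) = [:: -HH] ++ nseq k.+1 (-HH)) //.
rewrite (_ : nseq k.+2 hh = [:: hh] ++ nseq k.+1 hh) //.
rewrite !count_cat IH !count_cat.
rewrite (_ : [seq av i | i <- [:: (3 * k.+1).+1; (3 * k.+1).+2; (3 * k.+1).+3]] = [:: av (3 * k.+1).+1; av (3 * k.+1).+2; av (3 * k.+1).+3]) //.
move: (count p [seq av i | i <- iota 1 (3 * k.+1)]) (count p (nseq k.+1 (- HH))) (count p (nseq k.+1 hh)) => c1 c2 c3.
rewrite /=; lia.
Qed.

Lemma Nt_node Hv l r : Nt Hv (Node l r) = Nt Hv l + Nt Hv r. Proof. by []. Qed.
Lemma SN_node Hv l r : SN Hv (Node l r) = `|Nt Hv l + Nt Hv r| + SN Hv l + SN Hv r.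
Proof. by []. Qed.
Lemma Nt_leaf Hv x : Nt Hv (Leaf x) = cN Hv x. Proof. by []. Qed.
Lemma SN_leaf Hv x : SN Hv (Leaf x) = 0. Proof. by []. Qed.

Lemma Fg_SN av HH hh k :
  cN HH (- HH) = -3 -> cN HH hh = 0 ->
  (forall i, (1 <= i <= 3 * k.+1)%N -> cN HH (av i) = 1) ->
  Nt HH (Fg av HH hh k) = 0 /\ SN HH (Fg av HH hh k) = 3 * (k.+1)%:Z.
Proof.
move=> h1 h2.
have hg : forall j, (forall i, (1 <= i <= 3 * j.+1)%N -> cN HH (av i) = 1) ->
   Nt HH (grp av HH j) = 0 /\ SN HH (grp av HH j) = 3.
  move=> j hj; rewrite /= h1 !hj //; lia.
elim: k => [|k IH] hA.
  have [g1 g2] := hg 0%N hA.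
  have -> : Fg av HH hh 0 = Node (grp av HH 0) (Leaf hh) by [].
  by rewrite (Nt_node _ (grp av HH 0)) (SN_node _ (grp av HH 0)) g1 g2 Nt_leaf SN_leaf h2.
have [i1 i2] : Nt HH (Fg av HH hh k) = 0 /\ SN HH (Fg av HH hh k) = 3 * (k.+1)%:Z.
  apply: IH => i /andP [hi1 hi2]; apply: hA; rewrite hi1 /=; lia.
have [g1 g2] := hg k.+1 hA.
have -> : Fg av HH hh k.+1 = Node (Node (grp av HH k.+1) (Leaf hh)) (Fg av HH hh k) by [].
rewrite (Nt_node _ (Node _ _) (Fg _ _ _ _)) (SN_node _ (Node _ _) (Fg _ _ _ _)).
rewrite (Nt_node _ (grp av HH k.+1)) (SN_node _ (grp av HH k.+1)).
rewrite g1 g2 Nt_leaf SN_leaf h2 i1 i2; lia.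
Qed.
Arguments cost_bound {Hv D t}.
Arguments Fg_SN {av HH hh k}.



Lemma Nt_sum Hv t : Nt Hv t = \sum_(x <- leaves t) cN Hv x.
Proof.
elim: t => [x|l IHl r IHr] /=; first by rewrite big_seq1.
by rewrite big_cat IHl IHr.
Qed.

Lemma qt_sum t : qt t = \sum_(x <- leaves t) (if x < 0 then 1 else 0 : int).
Proof.
elim: t => [x|l IHl r IHr] /=; first by rewrite big_seq1.
by rewrite big_cat IHl IHr.
Qed.

Lemma is_node_sub z t : is_node z t ->
  {subset leaves z <= leaves t} /\ (size (leaves z) <= size (leaves t))%N.
Proof.
elim: t => [x|l IHl r IHr] /=.
  by case=> [->|[]] //; split.
case=> [->|[/IHl|/IHr]]; first by split.
  move=> [s1 s2]; split; first by move=> x /s1; rewrite mem_cat => ->.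
  by rewrite size_cat (leq_trans s2) // leq_addr.
move=> [s1 s2]; split; first by move=> x /s1; rewrite mem_cat orbC => ->.
by rewrite size_cat (leq_trans s2) // leq_addl.
Qed.

Lemma lam_bound (B : rat) (bt : nat -> rat) (n : nat) (s : seq (bool * nat)) :
  all (fun p => (p.2 <= n)%N) s -> (forall i, (i <= n)%N -> `|bt i| <= B) ->
  `|\sum_(p <- s) (if p.1 then - bt p.2 else bt p.2)| <= (size s)%:R * B.
Proof.
move=> hs hB; elim: s hs => [|p s IH] /=.
  by rewrite big_nil normr0 mul0r.
move=> /andP [hp hs].
rewrite big_cons; apply: le_trans (ler_normD _ _) _.
rewrite mulrS mulrDl mul1r; apply: lerD; last exact: IH.
by case: p.1; rewrite ?normrN; apply: hB.
Qed.

Lemma lt_half (x K : nat) : (x%:R : rat) < K%:R / 2 -> (x < K)%N.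
Proof.
move=> h2.
have h3 : (x%:R : rat) < K%:R.
  have : (0:rat) <= K%:R by rewrite ler0n.
  lra.
by rewrite ltr_nat in h3.
Qed.

Lemma leaf_facts (K MK hh HH bi : int) : 0 < K -> K <= MK -> 3 * K <= hh -> hh <= 4 * K ->
  HH = 300 * MK + K + hh -> 0 <= bi -> bi < K ->
  [/\ cN HH (bi + 100 * MK) = 1, `|3 * (bi + 100 * MK) - HH * 1| <= 12 * K,
      cN HH (- HH) = -3, cN HH hh = 0 & 0 < HH].
Proof.
move=> *; rewrite /cN; split; repeat case: ifP => ?; lia.
Qed.

Definition XL (aa : nat -> nat) (m : nat) (HH hh : int) : seq int :=
  [seq (aa i)%:Z | i <- iota 1 (3 * m)] ++ nseq m (- HH) ++ nseq m hh.

Lemma memX aa m HH hh x : x \in XL aa m HH hh ->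
  [\/ exists2 i, (1 <= i <= 3 * m)%N & x = (aa i)%:Z, x = - HH | x = hh].
Proof.
rewrite /XL !mem_cat => /orP [/mapP [i hi ->]|/orP [|]].
- by apply: Or31; exists i => //; move: hi; rewrite mem_iota; lia.
- by rewrite mem_nseq => /andP [_ /eqP ->]; apply: Or32.
- by rewrite mem_nseq => /andP [_ /eqP ->]; apply: Or33.
Qed.

Lemma sumX aa m HH hh (F : int -> int) :
  \sum_(x <- XL aa m HH hh) F x =
  \sum_(i <- iota 1 (3 * m)) F (aa i)%:Z + F (- HH) * m%:Z + F hh * m%:Z.
Proof.
have e1 : forall u, \sum_(x <- nseq m u) F x = F u * m%:Z.
  by move=> u; rewrite big_nseq iter_addr addr0 -mulr_natr natz.
by rewrite /XL big_cat big_cat e1 e1 big_map; apply: addrA.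
Qed.

Lemma size_XL aa m HH hh : size (XL aa m HH hh) = (5 * m)%N.
Proof. rewrite /XL !size_cat size_map size_iota !size_nseq; lia. Qed.

Lemma sum_iota_const (s : seq nat) (F : nat -> int) (c : int) :
  (forall i, i \in s -> F i = c) -> \sum_(i <- s) F i = c * (size s)%:Z.
Proof.
move=> hF; rewrite (eq_big_seq (fun=> c)) //.
by rewrite big_const_seq count_predT iter_addr addr0 -mulr_natr natz.
Qed.

Lemma final_bad (HH SNT cT cG E m3 : int) (bd : bool) :
  0 < HH -> m3 + bd%:Z <= SNT -> `|3 * cT - HH * SNT| <= E ->
  `|3 * cG - HH * m3| <= E -> cT <= cG -> 2 * E < HH -> bd = false.
Proof.
move=> hH hS h1 h2 hc hE.
have h3 : HH * (m3 + bd%:Z) <= HH * SNT by rewrite ler_wpM2l // ltW.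
rewrite mulrDr in h3.
move: hS h1 h2 h3; move: (HH * SNT) (HH * m3) => X Y.
case: bd => /= hS h1 h2 h3; last by [].
rewrite mulr1 in h3. exfalso; lia.
Qed.

Lemma N_one (HH X N P : int) : 0 < HH -> `|X - HH * N| <= P -> `|X - HH| <= P ->
  2 * P < HH -> N = 1.
Proof.
move=> hH h1 h2 hP.
have h3 : `|HH * (N - 1)| < HH * 1.
  rewrite (_ : HH * (N - 1) = (X - HH) - (X - HH * N)); last by ring.
  apply: le_lt_trans (ler_normB _ _) _; lia.
rewrite normrM gtr0_norm // ltr_pM2l // in h3.
lia.
Qed.

Lemma beta_bnd (HH a K : rat) : 0 < HH -> `|3 * a - HH| <= 12 * K ->
  `|a / HH - 1 / 3| <= 4 * K / HH.
Proof.
move=> hH h.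
rewrite ler_pdivlMr // -[X in _ * X]gtr0_norm // -normrM.
rewrite (_ : (a / HH - 1 / 3) * HH = (3 * a - HH) / 3); last by field; rewrite gt_eqF.
rewrite normrM (_ : `|3^-1| = 3^-1 :> rat) //. lra.
Qed.

Lemma beta0_bnd (HH hh K : rat) : 0 < HH -> 0 <= hh -> hh <= 4 * K ->
  `|hh / HH| <= 4 * K / HH.
Proof.
move=> hH h0 h1; rewrite ger0_norm; last by rewrite divr_ge0 // ltW.
by apply: ler_wpM2r => //; rewrite invr_ge0 ltW.
Qed.

Lemma lam_final (HHr lam X C : rat) : 0 < HHr -> X = (1/3 + lam) * HHr ->
  `|lam| * HHr <= C -> `|3 * X - HHr| <= 3 * C.
Proof.
move=> hH -> h.
rewrite (_ : 3 * ((1/3 + lam) * HHr) - HHr = 3 * (lam * HHr)); last by field.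
rewrite normrM normrM (gtr0_norm hH) (_ : `|3| = 3 :> rat) //.
by rewrite ler_pM2l.
Qed.

Lemma lam_mul (lam HHr n B : rat) : 0 < HHr -> `|lam| <= n * (B / HHr) -> `|lam| * HHr <= n * B.
Proof. by move=> hH h; rewrite -ler_pdivlMr // -mulrA. Qed.
Arguments leaf_facts {K MK hh HH bi}.

Lemma cast_bound (x HH K : int) : `|3 * x - HH| <= 12 * K ->
  `|3 * (x%:~R : rat) - HH%:~R| <= 12 * K%:~R.
Proof.
rewrite -(ler_int rat) intr_norm rmorphB /= !intrM. by [].
Qed.
Lemma cast_bound2 (x HH P : int) : `|3 * (x%:~R : rat) - HH%:~R| <= 3 * (P%:~R) ->
  `|3 * x - HH| <= 3 * P.
Proof.
by rewrite -(ler_int rat) intr_norm rmorphB /= !intrM.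
Qed.



Theorem lemma2p8 (m K : nat) (b : nat -> nat)
  (hm : (0 < m)%N) (hK : (0 < K)%N)
  (hbpos : forall i, (1 <= i <= 3 * m)%N -> (0 < b i)%N)
  (hb : forall i, (1 <= i <= 3 * m)%N ->
          (K%:R / 4 < (b i)%:R :> rat) /\ ((b i)%:R < K%:R / 2 :> rat))
  (hsum : (\sum_(1 <= i < (3 * m).+1) b i)%N = (m * K)%N)
  (T : tree) (hT : min_addition_tree (Xms m K b) T)
  (z : tree) (hz : is_node z T)
  (lam : rat) (hlam : is_lambda m K b lam)
  (hval : (nval z)%:~R = (1 / 3 + lam) * (H m K)%:~R) :
  exists x, z = Leaf x.
Proof.
have [hh3 hh4] := h_bounds m K hm.
have hadef : forall i, a m K b i = (b i + W m K)%N by [].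
set M := ((5 * m) ^ 2)%N.
have hWdef : W m K = (100 * (M * K))%N by rewrite /W -/M mulnA.
have hM : (M = 25 * (m * m))%N by rewrite /M expnS expn1 mulnACA.
clearbody M.
have hLdef : L m K = (300 * (M * K) + K)%N by rewrite /L hWdef; lia.
have hmM : (m <= M)%N.
  rewrite hM; apply: leq_trans (leq_pmulr m hm) (leq_pmull _ _) => //.
have hmK : (m * K <= M * K)%N by exact: leq_mul hmM (leqnn K).
have hKM : (K <= M * K)%N by apply: leq_pmull; apply: leq_trans hm hmM.
have hH2 : H m K = (300 * (M * K) + K)%N%:Z + h m K :=
  congr1 (fun n : nat => n%:Z + h m K) hLdef.
have hbK : forall i, (1 <= i <= 3 * m)%N -> (b i < K)%N.
  by move=> i hi; have [_ h2] := hb i hi; apply: lt_half.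
have ha : forall i, (a m K b i)%:Z = (b i)%:Z + 100 * (M * K)%N%:Z.
  by move=> i; rewrite hadef hWdef PoszD PoszM.
have eX : Xms m K b = XL (a m K b) m (H m K) (h m K) by [].
rewrite eX in hT.
have hlam' : exists s : seq (bool * nat), (size s <= 5 * m)%N /\
    all (fun p => (p.2 <= 3 * m)%N) s /\
    lam = \sum_(p <- s) (if p.1 then - beta m K b p.2 else beta m K b p.2) by exact: hlam.
have hbeta : forall i, beta m K b i = if i == 0%N then (h m K)%:~R / (H m K)%:~R
   else (a m K b i)%:R / (H m K)%:~R - 1 / 3 by [].
clear hlam eX hadef hWdef hLdef hb hsum.
have hMK : (M * K = 25 * (m * m) * K)%N by rewrite hM.
move: (beta m K b) hlam' hbeta => bt hlam' hbeta.
move: (H m K) (h m K) (a m K b) hval hh3 hh4 hH2 ha hT hbeta => HH hh aa hval hh3 hh4 hH2 ha hT hbeta.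
move: (M * K)%N hMK hmK hKM hH2 ha => MK hMK hmK hKM hH2 ha.
clear hM hmM M.
have hh3' : 3 * K%:Z <= hh by rewrite PoszM in hh3.
have hh4' : hh <= 4 * K%:Z by rewrite PoszM in hh4.
have hH2' : HH = 300 * MK%:Z + K%:Z + hh by rewrite hH2 PoszD PoszM.
have hK' : 0 < K%:Z by rewrite ltz_nat.
have hKM' : K%:Z <= MK%:Z by rewrite lez_nat.
have [_ _ fH fh hHpos] := leaf_facts hK' hKM' hh3' hh4' hH2' (lexx 0) hK'.
have fA : forall i, (1 <= i <= 3 * m)%N ->
    cN HH (aa i)%:Z = 1 /\ `|3 * (aa i)%:Z - HH * 1| <= 12 * K%:Z.
  move=> i hi; rewrite ha.
  have hb0 : 0 <= (b i)%:Z by [].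
  have hb1 : (b i)%:Z < K%:Z by rewrite ltz_nat hbK.
  by have [f1 f2 _ _ _] := leaf_facts hK' hKM' hh3' hh4' hH2' hb0 hb1.
have hD : 0 <= 12 * K%:Z by rewrite mulr_ge0 // ltW.
have hok : forall x, x \in XL aa m HH hh -> `|3 * x - HH * cN HH x| <= 12 * K%:Z.
  move=> x /memX [[i hi ->]| -> | ->].
  - by have [-> ] := fA i hi.
  - rewrite fH (_ : 3 * - HH - HH * -3 = 0); last by ring.
    by rewrite normr0.
  - rewrite fh mulr0 subr0 ger0_norm; last by rewrite mulr_ge0 // (le_trans _ hh3') // mulr_ge0 // ltW.
    by rewrite (_ : 12 * K%:Z = 3 * (4 * K%:Z)) ?ler_pM2l // mulrA.
have [hTperm hTmin] := hT.
have hokT : leafok HH (12 * K%:Z) T.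
  by move=> x hx; apply: hok; rewrite -(perm_mem hTperm).
have hsT : size (leaves T) = (5 * m)%N by rewrite (perm_size hTperm) size_XL.
have hiota : forall i, i \in iota 1 (3 * m) -> (1 <= i <= 3 * m)%N.
  by move=> i; rewrite mem_iota; lia.
have hNT : Nt HH T = 0.
  rewrite Nt_sum (perm_big _ hTperm) sumX fH fh (@sum_iota_const _ _ 1).
    by rewrite size_iota PoszM; lia.
  by move=> i /hiota /fA [].
have hqT : qt T = m%:Z.
  rewrite qt_sum (perm_big _ hTperm) sumX (@sum_iota_const _ _ 0) //.
  rewrite oppr_lt0 hHpos ltNge (le_trans _ hh3') ?mulr_ge0 ?ltW //.
  by rewrite mul0r mul1r mul0r add0r addr0.
have hcomb := comb HH T.
rewrite hqT hNT (_ : cf 0 = 0) // addr0 in hcomb.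
pose k := m.-1.
have em : m = k.+1 by rewrite prednK.
pose G := Fg (fun i => (aa i)%:Z) HH hh k.
have hGperm : perm_eq (leaves G) (XL aa m HH hh) by rewrite /XL em; exact: Fg_perm.
have hGSN : SN HH G = 3 * m%:Z.
  have hA : forall i, (1 <= i <= 3 * k.+1)%N -> cN HH (aa i)%:Z = 1.
    by move=> i hi; apply: (fA i _).1; rewrite em.
  have [_ ->] := Fg_SN fH fh hA.
  by rewrite em.
have hcost : cost T <= cost G by apply: hTmin.
have hokG : leafok HH (12 * K%:Z) G.
  by move=> x hx; apply: hok; rewrite -(perm_mem hGperm).
have hsG : size (leaves G) = (5 * m)%N by rewrite (perm_size hGperm) size_XL.
have cT := cost_bound (ltW hHpos) hD hokT.
have cG := cost_bound (ltW hHpos) hD hokG.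
rewrite hsT in cT; rewrite hsG hGSN in cG.
have hE : 12 * K%:Z * (5 * m)%N%:Z ^+ 2 = 12 * MK%:Z by rewrite hMK !PoszM; ring.
rewrite hE in cT cG.
have h2E : 2 * (12 * MK%:Z) < HH by rewrite hH2'; lia.
have hbadF := @final_bad _ _ _ _ _ _ _ hHpos hcomb cT cG hcost h2E.
case hzc : z => [x|l r]; first by exists x.
suff hbd : bad HH T by rewrite hbd in hbadF.
apply: (@bad_node HH z T hz); first by exists l, r.
have [hsub hsz] := @is_node_sub z T hz.
have hokz : leafok HH (12 * K%:Z) z by move=> x hx; apply: hokT; apply: hsub.
have d1 := delta_bound hokz.
have d2 : `|3 * nval z - HH * Nt HH z| <= 60 * (m * K)%N%:Z.
  apply: le_trans d1 _.
  rewrite hsT in hsz.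
  rewrite (_ : 60 * (m * K)%N%:Z = 12 * K%:Z * (5 * m)%N%:Z); last by rewrite !PoszM; ring.
  by rewrite ler_wpM2l // lez_nat.
have HHr0 : (0 : rat) < HH%:~R by rewrite ltr0z.
have [s [hs1 [hs2 hs3]]] := hlam'.
have hbt : forall i, (i <= 3 * m)%N -> `|bt i| <= 4 * K%:R / HH%:~R.
  move=> i hi; rewrite hbeta; case: eqP => [_|hi0].
    apply: beta0_bnd => //.
      by rewrite ler0z (le_trans _ hh3') // mulr_ge0 // ltW.
    have : (hh%:~R : rat) <= (4 * K%:Z)%:~R by rewrite ler_int.
    by rewrite intrM.
  apply: beta_bnd => //.
  have hi1 : (1 <= i <= 3 * m)%N by rewrite hi andbT lt0n; apply/eqP.
  have [_ f2] := fA i hi1.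
  rewrite mulr1 in f2.
  exact: cast_bound f2.
have hl1 := @lam_bound _ _ _ _ hs2 hbt.
rewrite -hs3 in hl1.
have hl2 := @lam_mul _ _ _ _ HHr0 hl1.
have hl3 : `|lam| * HH%:~R <= (5 * m)%N%:R * (4 * K%:R).
  apply: le_trans hl2 _; apply: ler_wpM2r.
    by rewrite mulr_ge0 // ler0n.
  by rewrite ler_nat.
have hl4 := @lam_final _ _ _ _ HHr0 hval hl3.
have eP : ((5 * m)%N%:R * (4 * K%:R) : rat) = ((20 * (m * K))%N)%:R.
  by rewrite !natrM; ring.
rewrite eP in hl4.
have d3 : `|3 * nval z - HH| <= 3 * (20 * (m * K))%N%:Z by exact: (@cast_bound2 (nval z) HH (20 * (m * K))%N%:Z hl4).
rewrite (_ : 3 * (20 * (m * K))%N%:Z = 60 * (m * K)%N%:Z) in d3; last by rewrite PoszM; ring.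
apply: (@N_one HH (3 * nval z) (Nt HH z) (60 * (m * K)%N%:Z) hHpos d2 d3).
rewrite hH2'. have : ((m * K)%N%:Z <= MK%:Z) by rewrite lez_nat.
lia.
Qed.
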